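(* Let $G$ be a finite group and $\mathcal{O}$ a conjugacy class of involutions of $G$. Then $\mathcal{O}$ is of type D if and only if there exist $r,s\in\mathcal{O}$ such that the order of $rs$ is even and at least $6$.
   Context: A conjugacy class $\mathcal{O}$ of a group (regarded as a rack with $x\triangleright y=xyx^{-1}$) is of type D iff there exist $r,s\in\mathcal{O}$ with $(rs)^2\neq(sr)^2$ such that $r$ and $s$ are not conjugate in the subgroup $\langle r,s\rangle$. (In rack terms: a rack is of type D if it contains a subrack that is a disjoint union $R\sqcup S$ of two subracks with $r\triangleright(s\triangleright(r\triangleright s))\neq s$ for some $r\in R$, $s\in S$.) *)

(* Defs.v *)
From mathcomp Require Import all_boot all_fingroup.
Set Implicit Arguments. Unset Strict Implicit. Unset Printing Implicit Defensive.
Local Open Scope group_scope.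

Definition type_D (gT : finGroupType) (O : {set gT}) : Prop :=
  exists r s : gT,
    [/\ r \in O, s \in O, (r * s) ^+ 2 != (s * r) ^+ 2
      & s \notin r ^: <<[set r; s]>>].

(* Main.v *)
Require Import Defs.
From mathcomp Require Import all_boot all_fingroup.
From mathcomp Require Import cyclic zify.
Local Open Scope group_scope.
Set Implicit Arguments. Unset Strict Implicit.

Section Inv.
Variables (gT : finGroupType) (r s : gT).
Hypotheses (hr : r * r = 1) (hs : s * s = 1).

Lemma invI (y : gT) : y * y = 1 -> y^-1 = y.
Proof. by move=> h; rewrite -[y^-1]mulg1 -h mulgA mulVg mul1g. Qed.

Let rV : r^-1 = r. Proof. exact: invI. Qed.
Let sV : s^-1 = s. Proof. exact: invI. Qed.

Lemma tV : (r * s)^-1 = s * r.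
Proof. by rewrite invMg rV sV. Qed.

Lemma tconj g : g \in [set r; s] -> (r * s) ^ g = (r * s)^-1.
Proof.
rewrite tV !inE => /orP [] /eqP ->; rewrite conjgE ?rV ?sV.
  by rewrite !mulgA hr mul1g.
by rewrite -!mulgA hs mulg1.
Qed.

Lemma conj_pow j : r ^ ((r * s) ^+ j) = (s * r) ^+ (2 * j) * r.
Proof.
elim: j => [|j IH]; first by rewrite expg0 conjg1 muln0 expg0 mul1g.
rewrite expgSr conjgM IH conjMg conjXg -tV.
have -> : (r * s)^-1 ^ (r * s) = (r * s)^-1.
  by rewrite conjgE mulVg mulg1.
have -> : r ^ (r * s) = (r * s)^-1 ^+ 2 * r.
  by rewrite conjgE tV expgS expg1 -!mulgA; congr (s * _); rewrite hr mulg1 mulgA hr mul1g.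
by rewrite mulgA -expgnDr mulnS addnC.
Qed.

Lemma odd_conj : odd #[r * s] -> s \in r ^: <<[set r; s]>>.
Proof.
move=> ho; apply/imsetP; exists ((r * s) ^+ (#[r * s]./2.+1)).
  by apply: groupX; apply: groupM; apply: mem_gen; rewrite !inE eqxx ?orbT.
rewrite conj_pow.
have -> : (2 * (#[r * s]./2.+1) = #[r * s] + 1)%N.
  by move: (odd_double_half #[r * s]); rewrite ho -muln2; lia.
rewrite expgD -tV expVgn expg_order invg1 mul1g expg1 tV -mulgA hr mulg1 //.
Qed.

Lemma even_nconj : ~~ odd #[r * s] -> s \notin r ^: <<[set r; s]>>.
Proof.
move=> he.
set t := r * s.
set E := <[t ^+ 2]>.
have Hg : forall g, g \in [set r; s] -> forall z, z \in E :* r -> z ^ g \in E :* r.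
  move=> g hg z; rewrite !mem_rcoset => hz.
  have -> : z ^ g * r^-1 = (z * r^-1) ^ g * (r ^ g * r^-1).
    by rewrite mulgA -conjMg -(mulgA z) mulVg mulg1.
  apply: groupM.
    case/cycleP: hz => k ->.
    by rewrite conjXg conjXg tconj // expVgn groupX // groupV cycle_id.
  move: hg; rewrite !inE => /orP [] /eqP ->.
    by rewrite conjgE rV hr mulg1 hr group1.
  rewrite conjgE sV rV.
  have -> : s * (r * s) * r = (t ^+ 2)^-1.
    by rewrite /t expgS expg1 invMg tV -!mulgA.
  by rewrite groupV cycle_id.
have HN : <<[set r; s]>> \subset 'N(E :* r).
  rewrite gen_subG; apply/subsetP => g hg; rewrite inE.
  apply/subsetP => y; rewrite mem_conjg => hy.
  by have := Hg g hg _ hy; rewrite -conjgM mulVg conjg1.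
apply/negP => /imsetP [g hg hsg].
have : s \in E :* r.
  by rewrite hsg memJ_norm ?(subsetP HN) // mem_rcoset mulgV group1.
rewrite mem_rcoset rV -tV groupV => /cycleP [k hk].
have : t ^+ 1 == (t ^+ 2) ^+ k by rewrite expg1 -hk.
rewrite -expgM eq_expg_mod_order => /eqP hm.
have h2 : (2 %| #[t])%N by rewrite dvdn2.
have := congr1 (fun m => m %% 2) hm; rewrite /= !modn_dvdm //.
rewrite modnMr modn_small //.
Qed.

End Inv.

Theorem lemma2p6 (gT : finGroupType) (G : {group gT}) (x : gT) :
  x \in G -> #[x] = 2 ->
  type_D (x ^: G) <->
  exists r s : gT, [/\ r \in x ^: G, s \in x ^: G,
                      ~~ odd #[r * s] & 6 <= #[r * s]].
Proof.
move=> xG ox.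
have inv : forall y, y \in x ^: G -> y * y = 1.
  by move=> y /imsetP [g _ ->]; have := expg_order (x ^ g); rewrite orderJ ox expgS expg1.
have key : forall r s : gT, r * r = 1 -> s * s = 1 ->
    ((r * s) ^+ 2 != (s * r) ^+ 2) = ~~ (#[r * s] %| 4).
  move=> r s hr hs; rewrite -(tV hr hs) expVgn order_dvdn; congr negb.
  apply/eqP/eqP => h.
    by rewrite (_ : 4 = 2 + 2) // expgD {1}h mulVg.
  by rewrite -[RHS]mulg1 -h (_ : 4 = 2 + 2)%N // expgnDr mulKg.
split.
  case=> r [s [hr hs hne hn]]; exists r, s; split => //.
    exact: (contraNN (odd_conj (inv _ hr) (inv _ hs)) hn).
  rewrite key ?inv // in hne.
  have he : ~~ odd #[r * s].
    exact: (contraNN (odd_conj (inv _ hr) (inv _ hs)) hn).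
  move: hne he; have := order_gt0 (r * s).
  by case: #[r * s] => [|[|[|[|[|[|n]]]]]].
case=> r [s [hr hs he h6]]; exists r, s; split => //.
  rewrite key ?inv //; apply/negP => /dvdn_leq h; by have := h isT; case: #[r * s] h6 => [|[|[|[|[|[|n]]]]]].
exact: even_nconj (inv _ hr) (inv _ hs) he.
Qed.
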